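(* Let $w\ge 3$ and let $C_1$ be the set of vertices $x=(x_1,\dots,x_{2w})$ of the Johnson graph $J(2w,w)$ such that $(x_1,x_2,x_3,x_4,x_5)\in B$, where $B=\{(1,0,0,0,0),(1,1,0,0,0),(1,0,1,0,0),(0,0,0,1,1),(0,1,1,1,1),(0,0,1,1,1),(0,1,0,1,1),(1,1,1,0,0)\}$, and let $C_2$ be the complement of $C_1$. Then $(C_1,C_2)$ is an equitable partition with quotient matrix $\begin{pmatrix} w^2-3w+2 & 3w-2\\ w & w^2-w\end{pmatrix}$.
   Context: The Johnson graph $J(n,w)$ has as vertices the binary vectors of length $n$ with exactly $w$ ones; two vertices are adjacent iff they have exactly $w-1$ common ones. A partition $(C_1,C_2)$ of the vertex set is equitable with quotient matrix $S=(s_{ij})$ if every vertex of $C_i$ has exactly $s_{ij}$ neighbours in $C_j$. *)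

(* Defs.v *)
From mathcomp Require Import all_boot all_order all_algebra.
Set Implicit Arguments. Unset Strict Implicit. Unset Printing Implicit Defensive.

(* Vertices of J(n,w): binary vectors of length n with w ones, encoded as the
   set of positions (in 'I_n, 0-based) carrying a one. *)
Definition johnson_vertices (n w : nat) : {set {set 'I_n}} :=
  [set x : {set 'I_n} | #|x| == w].

Definition johnson_adj (n w : nat) : rel {set 'I_n} :=
  fun x y => #|x :&: y| == w.-1.

(* Coordinate k (0-based, i.e. x_{k+1} in the paper) of the binary vector x. *)
Definition coord (n : nat) (x : {set 'I_n}) (k : nat) : bool :=
  [exists i : 'I_n, (i \in x) && (val i == k)].

Definition prefix5 (n : nat) (x : {set 'I_n}) : seq bool :=
  [seq coord x k | k <- iota 0 5].

Definition B : seq (seq bool) :=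
  [:: [:: true ; false; false; false; false];
      [:: true ; true ; false; false; false];
      [:: true ; false; true ; false; false];
      [:: false; false; false; true ; true ];
      [:: false; true ; true ; true ; true ];
      [:: false; false; true ; true ; true ];
      [:: false; true ; false; true ; true ];
      [:: true ; true ; true ; false; false]].

Definition C1 (w : nat) : {set {set 'I_(2 * w)}} :=
  [set x in johnson_vertices (2 * w) w | prefix5 x \in B].

Definition C2 (w : nat) : {set {set 'I_(2 * w)}} :=
  johnson_vertices (2 * w) w :\: C1 w.

Definition equitable_partition2 (T : finType) (V : {set T}) (adj : rel T)
    (P1 P2 : {set T}) (S : 'M[nat]_2) : Prop :=
  let cell (i : 'I_2) := if val i == 0 then P1 else P2 in
  [/\ P1 :|: P2 = V, [disjoint P1 & P2], P1 != set0, P2 != set0 &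
      forall (i j : 'I_2) (x : T), x \in cell i ->
        #|[set y in cell j | adj x y]| = S i j].

Definition quotient_matrix (w : nat) : 'M[nat]_2 :=
  \matrix_(i < 2, j < 2)
    if val i == 0 then (if val j == 0 then w ^ 2 - 3 * w + 2 else 3 * w - 2)
    else (if val j == 0 then w else w ^ 2 - w).

(* Main.v *)
Require Import Defs.
From mathcomp Require Import all_boot all_order all_algebra zify.

Definition gp (c : nat -> bool) (al be : nat) : seq bool :=
  [seq (be == k) || (c k && (al != k)) | k <- iota 0 5].
Definition hh (c : nat -> bool) (al be : nat) : nat := (gp c al be \in B).
Definition E (c : nat -> bool) (m1 m0 : nat) : nat :=
  \sum_(j<5) c j * (\sum_(k<5) ~~ c k * hh c j k + m0 * hh c j 5)
  + m1 * (\sum_(k<5) ~~ c k * hh c 5 k + m0 * hh c 5 5).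

Lemma E_val (c : nat -> bool) m1 m0 w : 3 <= w ->
  m1 + \sum_(k<5) c k = w -> m0 + \sum_(k<5) ~~ c k = w ->
  E c m1 m0 = if [seq c k | k <- iota 0 5] \in B then w ^ 2 - 3 * w + 2 else w.
Proof.
move=> hw; rewrite /E /hh /gp !big_ord_recr !big_ord0 /=.
case: (c 0); case: (c 1); case: (c 2); case: (c 3); case: (c 4) => /= h1 h0.
all: nia.
Qed.


Lemma coordE n (x : {set 'I_n}) (i : 'I_n) : Defs.coord x i = (i \in x).
Proof.
apply/existsP/idP => [[j /andP [hj /eqP e]]|hi]; last by exists i; rewrite hi eqxx.
by rewrite (_ : i = j) //; apply: val_inj.
Qed.

Lemma coord_set n (P : nat -> bool) k : k < n -> Defs.coord [set i : 'I_n | P i] k = P k.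
Proof.
move=> hk; apply/existsP/idP => [[i /andP[]]|hP].
  by rewrite inE => hi /eqP <-.
by exists (Ordinal hk); rewrite inE /= hP eqxx.
Qed.

Lemma sum_split n (A : {set 'I_n}) (P : nat -> bool) (F : nat -> nat) :
  5 <= n -> (forall i : 'I_n, (i \in A) = P i) ->
  \sum_(a in A) F (minn a 5) = \sum_(k < 5) P k * F k + #|[set a in A | 5 <= a]| * F 5.
Proof.
move=> h5 hP.
rewrite (bigID (fun a : 'I_n => a < 5)) /=; congr (_ + _).
  rewrite (big_ord_widen n (fun k => P k * F k) h5) big_mkcond [RHS]big_mkcond.
  apply: eq_bigr => i _; rewrite hP.
  case: (ltnP i 5) => hi; last by rewrite andbF.
  by rewrite andbT; case: (P i); rewrite ?mul1n.
transitivity (\sum_(i in [set a in A | 5 <= a]) F 5); last by rewrite sum_nat_const.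
apply: eq_big => [i|i]; first by rewrite !inE -leqNgt.
by move=> /andP[_]; rewrite -leqNgt => /minn_idPr ->.
Qed.



Lemma count_nbrs n w (x : {set 'I_n}) (Q : pred {set 'I_n}) : 0 < w -> #|x| = w ->
  #|[set y in johnson_vertices n w | johnson_adj w x y && Q y]|
    = \sum_(a in x) \sum_(b in ~: x) Q (b |: (x :\ a)).
Proof.
move=> w0 cx.
pose f := fun ab : 'I_n * 'I_n => ab.2 |: (x :\ ab.1).
pose D := [set ab in setX x (~: x) | Q (f ab)].
transitivity #|f @: D|.
  apply: eq_card => y; apply/idP/imsetP.
    rewrite !inE => /andP [/eqP cy /andP [/eqP cxy hq]].
    have : #|x :\: y| == 1 by rewrite cardsD cx cxy; apply/eqP; lia.
    case/cards1P => a ha.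
    have : #|y :\: x| == 1 by rewrite cardsD cy setIC cxy; apply/eqP; lia.
    case/cards1P => b hb.
    have ey : y = b |: (x :\ a).
      apply/setP => z.
      have hza : (z \notin y) && (z \in x) = (z == a) by rewrite -in_set1 -ha inE.
      have hzb : (z \notin x) && (z \in y) = (z == b) by rewrite -in_set1 -hb inE.
      rewrite !inE -hza -hzb; by case: (z \in y); case: (z \in x).
    have : a \in x :\: y by rewrite ha set11.
    have : b \in y :\: x by rewrite hb set11.
    rewrite !inE => /andP [bx _] /andP [_ ax].
    exists (a, b) => //; rewrite !inE /= ax bx /=; rewrite /f /= -ey.
    by [].
  case=> [[a b]]; rewrite !inE /= => /andP[/andP [ax bx] hq] ->.
  rewrite hq andbT; apply/andP; split.
    rewrite cardsU1 inE (negbTE bx) andbF /=.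
    by move: cx; rewrite (cardsD1 a) ax => <-.
  rewrite /johnson_adj /f /=.
  have -> : x :&: (b |: x :\ a) = x :\ a.
    apply/setP => z; rewrite !inE.
    have [->|_] := eqVneq z b; first by rewrite (negbTE bx) andbF.
    by case: (z \in x); rewrite ?andbT ?andbF.
  by move: cx; rewrite (cardsD1 a) ax => <-.
rewrite card_in_imset; last first.
  move=> [a b] [a' b']; rewrite !inE /= => /andP[/andP[ax bx] _] /andP[/andP[a'x b'x] _] e.
  have : b \in b' |: x :\ a' by rewrite -[b' |: _]/(f (a', b')) -e setU11.
  rewrite !inE (negbTE bx) andbF orbF => /eqP eb; subst b'.
  have := congr1 (fun s : {set 'I_n} => a \in s) e; rewrite /f /=.
  have nab : a != b by apply: contraNneq bx => <-.
  rewrite !inE eqxx /= ax andbT (negbTE nab) /= => /esym /negbFE /eqP ->.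
  by [].
rewrite pair_big_dep -sum1_card big_mkcond [RHS]big_mkcond.
apply: eq_bigr => [[a b]] _; rewrite !inE /=.
by case: (a \in x); case: (b \in x); case: (Q _).
Qed.



Lemma card_interval n w : w + 3 <= n -> #|[set i : 'I_n | 3 <= i < w + 3]| = w.
Proof.
move=> hn.
rewrite -sum1_card.
rewrite (eq_bigl (fun i : 'I_n => (3 <= i) && (i < w + 3))); last by move=> i; rewrite inE.
rewrite -(@big_ord_widen_cond _ 0 addn (w+3) n (fun i => 3 <= i) (fun _ => 1) hn).
rewrite -(big_mkord (fun i => 2 < i) (fun _ => 1)) (big_cat_nat (n:=3)) ?leq_addl //=.
rewrite [X in X + _]big_nat_cond [X in X + _]big_pred0; last by case=> [|[|[|i]]].
rewrite add0n big_mkcond (eq_big_nat _ _ (F2 := fun _ => 1)).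
  by rewrite sum_nat_const_nat muln1 addnK.
by move=> i /andP[h _]; rewrite h.
Qed.


Lemma prefix_move n (x : {set 'I_n}) (a b : 'I_n) : 5 <= n ->
  prefix5 (b |: x :\ a) = gp (Defs.coord x) (minn a 5) (minn b 5).
Proof.
move=> h5; rewrite /prefix5 /gp; apply/eq_in_map => k; rewrite mem_iota add0n => /andP[_ hk].
have hkn : k < n by apply: leq_trans h5.
have hm : forall c : 'I_n, (minn c 5 == k) = (Ordinal hkn == c).
  move=> c; rewrite -(inj_eq val_inj) /=.
  case: (ltnP c 5) => hc.
    by rewrite ?(minn_idPl (ltnW hc)) eq_sym.
  rewrite ?(minn_idPr hc); apply/eqP/eqP; lia.
rewrite -[k]/(val (Ordinal hkn)) !coordE !inE !hm.
by case: (_ == b); case: (_ == a); case: (_ \in x); rewrite ?andbT ?andbF.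
Qed.


Lemma N1_val w (x : {set 'I_(2 * w)}) : 3 <= w -> x \in johnson_vertices (2 * w) w ->
  #|[set y in C1 w | johnson_adj w x y]| =
    if prefix5 x \in B then w ^ 2 - 3 * w + 2 else w.
Proof.
move=> hw hx.
have cx : #|x| = w by move: hx; rewrite in_set => /eqP.
have h5 : 5 <= 2 * w by lia.
have -> : [set y in C1 w | johnson_adj w x y] =
    [set y in johnson_vertices (2 * w) w | johnson_adj w x y && (prefix5 y \in B)].
  apply/setP => y; rewrite !(in_setD, in_set).
  by case: (#|y| == w); case: (johnson_adj _ _ _); case: (prefix5 y \in B).
rewrite count_nbrs //; last by lia.
set c := Defs.coord x.
have hPx : forall i : 'I_(2 * w), (i \in x) = c i by move=> i; rewrite /c coordE.
have hPc : forall i : 'I_(2 * w), (i \in ~: x) = ~~ c i by move=> i; rewrite in_set hPx.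
set m1 := #|[set a in x | 5 <= a]|.
set m0 := #|[set a in ~: x | 5 <= a]|.
rewrite (eq_bigr (fun a : 'I_(2 * w) =>
   \sum_(k < 5) ~~ c k * hh c (minn a 5) k + m0 * hh c (minn a 5) 5)); last first.
  move=> a _.
  transitivity (\sum_(b in ~: x) hh c (minn a 5) (minn b 5)).
    by apply: eq_bigr => b _; rewrite /hh prefix_move.
  exact: (@sum_split _ _ (fun k => ~~ c k) (fun be => hh c (minn a 5) be) h5 hPc).
rewrite (@sum_split _ _ c (fun al => \sum_(k < 5) ~~ c k * hh c al k + m0 * hh c al 5) h5 hPx).
apply: (@E_val c) => //.
  move: (@sum_split _ _ c (fun _ => 1) h5 hPx) => /=; rewrite sum1_card cx => e; rewrite [RHS]e.
  rewrite muln1 addnC; congr (_ + _); apply: eq_bigr => k _; by rewrite muln1.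
have cc : #|~: x| = w by move: (cardsC x); rewrite card_ord cx; lia.
move: (@sum_split _ _ (fun k => ~~ c k) (fun _ => 1) h5 hPc) => /=; rewrite sum1_card cc => e; rewrite [RHS]e.
rewrite muln1 addnC; congr (_ + _); apply: eq_bigr => k _; by rewrite muln1.
Qed.

Lemma N12 w (x : {set 'I_(2 * w)}) : 3 <= w -> x \in johnson_vertices (2 * w) w ->
  #|[set y in C1 w | johnson_adj w x y]| + #|[set y in C2 w | johnson_adj w x y]| = w * w.
Proof.
move=> hw hx.
have cx : #|x| = w by move: hx; rewrite in_set => /eqP.
have cc : #|~: x| = w by move: (cardsC x); rewrite card_ord cx; lia.
have -> : [set y in C1 w | johnson_adj w x y] =
    [set y in johnson_vertices (2 * w) w | johnson_adj w x y && (prefix5 y \in B)].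
  apply/setP => y; rewrite !(in_setD, in_set).
  by case: (#|y| == w); case: (johnson_adj _ _ _); case: (prefix5 y \in B).
have -> : [set y in C2 w | johnson_adj w x y] =
    [set y in johnson_vertices (2 * w) w | johnson_adj w x y && ~~ (prefix5 y \in B)].
  apply/setP => y; rewrite !(in_setD, in_set).
  by case: (#|y| == w); case: (johnson_adj _ _ _); case: (prefix5 y \in B).
rewrite !count_nbrs //; try lia.
rewrite -big_split /= (eq_bigr (fun _ => w)) ?sum_nat_const ?cx //.
move=> a _; rewrite -big_split /= (eq_bigr (fun _ => 1)) ?sum1_card ?cc //.
by move=> b _; case: (_ \in B).
Qed.

Lemma N2_val w (x : {set 'I_(2 * w)}) : 3 <= w -> x \in johnson_vertices (2 * w) w ->
  #|[set y in C2 w | johnson_adj w x y]| =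
    if prefix5 x \in B then 3 * w - 2 else w ^ 2 - w.
Proof.
move=> hw hx.
have e1 := N1_val w x hw hx; have e2 := N12 w x hw hx.
have hww : 3 * w <= w * w by rewrite leq_mul2r hw orbT.
move: e1 e2; case: (prefix5 x \in B) => -> ; rewrite expnS expn1; lia.
Qed.

Theorem mainTheorem3 (w : nat) (hw : 3 <= w) :
  equitable_partition2 (johnson_vertices (2 * w) w) (@johnson_adj (2 * w) w)
    (C1 w) (C2 w) (quotient_matrix w).
Proof.
have h5 : 5 <= 2 * w by lia.
pose x0 := [set i : 'I_(2 * w) | 3 <= i < w + 3].
have x0V : x0 \in johnson_vertices (2 * w) w by rewrite in_set card_interval //; lia.
have px0 : prefix5 x0 = [:: false; false; false; true; true].
  rewrite /prefix5 /x0 /= !(@coord_set (2 * w) (fun i => 3 <= i < w + 3)); try lia.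
  have h3 : 3 < w + 3 by lia.
  have h4 : 4 < w + 3 by lia.
  by rewrite /= h3 h4.
have x0C1 : x0 \in C1 w by rewrite in_set x0V px0.
have C1V : forall y, y \in C1 w -> y \in johnson_vertices (2 * w) w.
  by move=> y; rewrite in_set => /andP[].
have key : forall (i j : 'I_2) (x : {set 'I_(2 * w)}),
    x \in (if val i == 0 then C1 w else C2 w) ->
    #|[set y in (if val j == 0 then C1 w else C2 w) | johnson_adj w x y]| =
    quotient_matrix w i j.
  move=> i j x; rewrite /quotient_matrix mxE.
  case: i => [[|[|//]] hi] /= hx.
    have xV := C1V _ hx.
    have pB : prefix5 x \in B by move: hx; rewrite in_set => /andP[].
    case: j => [[|[|//]] hj] /=; first by rewrite N1_val // pB.
    by rewrite N2_val // pB.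
  have xV : x \in johnson_vertices (2 * w) w by move: hx; rewrite !(in_setD, in_set) => /andP[].
  have pB : (prefix5 x \in B) = false.
    move: hx; rewrite !(in_setD, in_set) => /andP[h1 h2]; rewrite h2 /= in h1; exact: negbTE h1.
  case: j => [[|[|//]] hj] /=; first by rewrite N1_val // pB.
  by rewrite N2_val // pB.
split.
- apply/setP => y; rewrite !(in_setD, in_set).
  by case: (#|y| == w); case: (prefix5 y \in B).
- rewrite -setI_eq0; apply/eqP/setP => y; rewrite !(in_setD, in_set).
  by case: (#|y| == w); case: (prefix5 y \in B).
- by apply/set0Pn; exists x0.
- have := key (Ordinal (isT : 0 < 2)) (Ordinal (isT : 1 < 2)) x0 x0C1.
  rewrite /quotient_matrix mxE /= => e.
  have : 0 < #|[set y in C2 w | johnson_adj w x0 y]| by rewrite e; lia.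
  case/card_gt0P => y; rewrite in_set => /andP[hy _].
  by apply/set0Pn; exists y.
- exact: key.
Qed.
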